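(* For any two knots $K_1,K_2\subset S^3$, $\delta(K_1\# K_2)=\delta(K_1)\delta(K_2)$. Furthermore, \[ b_{\mathrm{e}}(K_1\# K_2)=b_{\mathrm{e}}(K_1)+b_{\mathrm{e}}(K_2)+\tfrac14(\delta(K_1)-1)(\delta(K_2)-1),\] \[ b_{\mathrm{o}}(K_1\# K_2)=b_{\mathrm{o}}(K_1)+b_{\mathrm{o}}(K_2)+\tfrac14(\delta(K_1)-1)(\delta(K_2)-1).\]
   Context: For a knot $K\subset S^3$, $\widehat{\mathrm{CFK}}(K)$ denotes the (hat) knot Floer chain complex with coefficients in $\mathbb{F}_2$: a finite-dimensional, graded, filtered chain complex (differential lowering grading by one, not increasing filtration level), well defined up to filtered chain homotopy equivalence; its unfiltered homology is one-dimensional, in grading $0$, and $\widehat{\mathrm{CFK}}(K_1\# K_2)\simeq \widehat{\mathrm{CFK}}(K_1)\otimes\widehat{\mathrm{CFK}}(K_2)$. A bar $(T\to B)$ is a two-dimensional complex with homogeneous basis $T,B$, $\partial T=B$, and filtration level of $B$ strictly less than that of $T$; it is even or odd according as the grading of $B$ is even or odd. A bar-complex is a complex together with a direct sum decomposition into one-dimensional complexes and bars. Every finite-dimensional graded filtered complex over $\mathbb{F}_2$ is filtered chain homotopy equivalent to a bar-complex, which is unique up to isomorphism. Let $\widehat{C}(K)$ be the bar-complex representative of $\widehat{\mathrm{CFK}}(K)$. Define $\delta(K)=\dim\widehat{C}(K)$ (equal to the total dimension of knot Floer homology $\widehat{\mathrm{HFK}}(K)$), and let $b_{\mathrm{e}}(K)$,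 $b_{\mathrm{o}}(K)$ be the numbers of even and odd bars in $\widehat{C}(K)$; thus $\delta(K)=1+2(b_{\mathrm{e}}(K)+b_{\mathrm{o}}(K))$. *)

(* Defs.v *)
From mathcomp Require Import all_boot all_algebra.
Set Implicit Arguments. Unset Strict Implicit. Unset Printing Implicit Defensive.
Import GRing.Theory Num.Theory.
Local Open Scope ring_scope.

(* A finite-dimensional graded filtered chain complex over F_2, presented by a
   homogeneous filtered basis [gen] (each generator has a (Maslov) grading [gr]
   and a filtration level [flv]); [dif x y] is the coefficient of [y] in [d x]. *)
Record cx := Cx {
  gen : finType;
  gr : gen -> int;
  flv : gen -> int;
  dif : gen -> gen -> 'F_2 }.
Arguments gr : clear implicits.
Arguments flv : clear implicits.
Arguments dif : clear implicits.

Definition mcomp (T U V : finType) (f : T -> U -> 'F_2) (g : U -> V -> 'F_2)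
  : T -> V -> 'F_2 := fun x z => \sum_(y : U) f x y * g y z.

Definition idm (T : finType) : T -> T -> 'F_2 := fun x y => (x == y)%:R.

Definition is_cx (C : cx) : Prop :=
  (forall x y : gen C, dif C x y != 0 ->
      gr C y = gr C x - 1 /\ (flv C y <= flv C x)%R) /\
  (forall x z : gen C, mcomp (dif C) (dif C) x z = 0).

Definition fmap (C C' : cx) (f : gen C -> gen C' -> 'F_2) : Prop :=
  (forall x y, f x y != 0 -> gr C' y = gr C x /\ (flv C' y <= flv C x)%R) /\
  (forall x z, mcomp (dif C) f x z = mcomp f (dif C') x z).

Definition fhtpy (C : cx) (h : gen C -> gen C -> 'F_2) : Prop :=
  forall x y, h x y != 0 -> gr C y = gr C x + 1 /\ (flv C y <= flv C x)%R.

Definition fhe (C C' : cx) : Prop :=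
  exists (f : gen C -> gen C' -> 'F_2) (g : gen C' -> gen C -> 'F_2)
         (h : gen C -> gen C -> 'F_2) (h' : gen C' -> gen C' -> 'F_2),
    [/\ fmap f, fmap g, fhtpy h & fhtpy h'] /\
    (forall x z, idm x z - mcomp f g x z =
                 mcomp (dif C) h x z + mcomp h (dif C) x z) /\
    (forall x z, idm x z - mcomp g f x z =
                 mcomp (dif C') h' x z + mcomp h' (dif C') x z).

(* tensor product of complexes (over F_2, no signs needed) *)
Definition tensor (C1 C2 : cx) : cx :=
  @Cx (gen C1 * gen C2)%type
      (fun p => gr C1 p.1 + gr C2 p.2)
      (fun p => flv C1 p.1 + flv C2 p.2)
      (fun p q => dif C1 p.1 q.1 * (p.2 == q.2)%:R + (p.1 == q.1)%:R * dif C2 p.2 q.2).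

Definition difmx (C : cx) : 'M['F_2]_#|gen C| :=
  \matrix_(i, j) dif C (enum_val i) (enum_val j).

Definition grproj (C : cx) (g : int) : 'M['F_2]_#|gen C| :=
  \matrix_(i, j) ((i == j) && (gr C (enum_val i) == g))%:R.

(* dimension of the (unfiltered) homology in grading g:
   dim C_g - rank (d restricted to C_g) - dim (im d /\ C_g) *)
Definition homdim (C : cx) (g : int) : nat :=
  (#|[pred x : gen C | gr C x == g]| - \rank (grproj C g *m difmx C)
     - \rank (difmx C *m grproj C g))%N.

(* bar-complex in basis form: a direct sum of one-dimensional complexes and
   bars (T -> B) with filtration of B strictly less than that of T *)
Definition is_barcx (B : cx) : Prop :=
  [/\ is_cx B,
      (forall x y, dif B x y != 0 -> (flv B y < flv B x)%R),
      (forall x y z, dif B x y != 0 -> dif B x z != 0 -> y = z),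
      (forall x y z, dif B x z != 0 -> dif B y z != 0 -> x = y) &
      (forall x y z, dif B x y != 0 -> dif B z x = 0 /\ dif B y z = 0)].

(* delta = total dimension; bars are counted via their bottom generator *)
Definition delta (B : cx) : nat := #|gen B|.
Definition bars_e (B : cx) : nat :=
  #|[pred y : gen B | [exists x, dif B x y != 0] && ~~ odd `|gr B y|%N]|.
Definition bars_o (B : cx) : nat :=
  #|[pred y : gen B | [exists x, dif B x y != 0] && odd `|gr B y|%N]|.

(* Main.v *)
Require Import Defs.
From mathcomp Require Import all_boot all_order all_algebra ring zify lra.
From Stdlib Require Import FunctionalExtensionality.
Set Implicit Arguments. Unset Strict Implicit. Unset Printing Implicit Defensive.
Import Order.TTheory GRing.Theory Num.Theory.
Local Open Scope ring_scope.

Lemma F2_neq0 (x : 'F_2) : x != 0 -> x = 1.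
Proof. by case: x => [[|[|n]]] //= H _; apply/val_inj. Qed.

Lemma F2_addxx (x : 'F_2) : x + x = 0.
Proof. by case: x => [[|[|n]]] //= H; apply/val_inj. Qed.

Lemma F2_opp (x : 'F_2) : - x = x.
Proof. by apply/eqP; rewrite eq_sym -subr_eq0 opprK F2_addxx. Qed.

Lemma mxF2_addxx m n (A : 'M['F_2]_(m, n)) : A + A = 0.
Proof. by apply/matrixP => i j; rewrite !mxE F2_addxx. Qed.

Lemma mxF2_opp m n (A : 'M['F_2]_(m, n)) : - A = A.
Proof. by apply/matrixP => i j; rewrite !mxE F2_opp. Qed.

Definition mx (T U : finType) (f : T -> U -> 'F_2) : 'M['F_2]_(#|T|, #|U|) :=
  \matrix_(i, j) f (enum_val i) (enum_val j).

Lemma sum_ev (U : finType) (F : U -> 'F_2) :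
  \sum_(j < #|U|) F (enum_val j) = \sum_(y : U) F y.
Proof. by rewrite -big_enum_val; apply: eq_bigl => y. Qed.

Lemma mx_mcomp (T U V : finType) (f : T -> U -> 'F_2) (g : U -> V -> 'F_2) :
  mx (mcomp f g) = mx f *m mx g.
Proof.
apply/matrixP => i k; rewrite !mxE /mcomp -sum_ev.
by apply: eq_bigr => j _; rewrite !mxE.
Qed.

Lemma mxD (T U : finType) (f g : T -> U -> 'F_2) :
  mx (fun x y => f x y + g x y) = mx f + mx g.
Proof. by apply/matrixP => i j; rewrite !mxE. Qed.

Lemma mxB (T U : finType) (f g : T -> U -> 'F_2) :
  mx (fun x y => f x y - g x y) = mx f - mx g.
Proof. by apply/matrixP => i j; rewrite !mxE. Qed.

Lemma mx_idm (T : finType) : mx (@idm T) = 1%:M.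
Proof.
apply/matrixP => i j; rewrite !mxE /idm.
by rewrite (inj_eq enum_val_inj).
Qed.

Lemma mx0 (T U : finType) : mx (fun (x : T) (y : U) => (0 : 'F_2)) = 0.
Proof. by apply/matrixP => i j; rewrite !mxE. Qed.

Lemma mx_ext (T U : finType) (f g : T -> U -> 'F_2) :
  (forall x y, f x y = g x y) -> mx f = mx g.
Proof. by move=> H; apply/matrixP => i j; rewrite !mxE H. Qed.

Definition supp (C C' : cx) (k : int) (f : gen C -> gen C' -> 'F_2) :=
  forall x y, f x y != 0 -> gr C' y = gr C x + k /\ (flv C' y <= flv C x)%R.

Lemma sum_neq0 (U : finType) (F : U -> 'F_2) :
  \sum_y F y != 0 -> exists y, F y != 0.
Proof.
move=> H; apply/existsP; apply: contraR H => /existsPn H.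
by rewrite big1 // => y _; apply/eqP; rewrite -[_ == _]negbK H.
Qed.

Lemma supp_mcomp (C C' C'' : cx) k k' f g :
  @supp C C' k f -> @supp C' C'' k' g -> supp (k + k') (mcomp f g).
Proof.
move=> Hf Hg x z /sum_neq0 [y]; rewrite mulf_eq0 negb_or => /andP [H1 H2].
have [e1 l1] := Hf _ _ H1; have [e2 l2] := Hg _ _ H2.
by split; [rewrite e2 e1 addrA | exact: le_trans l2 l1].
Qed.

Lemma supp_add (C C' : cx) k f g :
  @supp C C' k f -> @supp C C' k g -> supp k (fun x y => f x y + g x y).
Proof.
move=> Hf Hg x y H.
have [H1|H1] := boolP (f x y != 0); first exact: Hf.
apply: Hg; apply: contraNneq H => ->; move: H1; rewrite negbK => /eqP ->.
by rewrite addr0.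
Qed.

Lemma supp_idm (C : cx) : @supp C C 0 (@idm _).
Proof.
move=> x y; rewrite /idm; have [->|ne] := eqVneq x y; first by rewrite addr0.
by rewrite eqxx.
Qed.

Lemma supp_k (C C' : cx) k k' f : k = k' -> @supp C C' k f -> supp k' f.
Proof. by move=> ->. Qed.

Lemma grproj_mx (C C' : cx) k (f : gen C -> gen C' -> 'F_2) g :
  supp k f -> grproj C g *m mx f = mx f *m grproj C' (g + k).
Proof.
move=> Hf; apply/matrixP => i j; rewrite !mxE.
rewrite (bigD1 i) //= big1 ?addr0; last first.
  by move=> l /negbTE nl; rewrite !mxE eq_sym nl mul0r.
rewrite (bigD1 j) //= big1 ?addr0; last first.
  by move=> l /negbTE nl; rewrite !mxE nl andFb mulr0.
rewrite !mxE !eqxx /=.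
have [H|H] := eqVneq (f (enum_val i) (enum_val j)) 0; first by rewrite H mulr0 mul0r.
have [-> _] := Hf _ _ H.
by rewrite (inj_eq (addIr k)) mulrC.
Qed.

Definition FHE (C C' : cx) := exists (f : gen C -> gen C' -> 'F_2)
  (g : gen C' -> gen C -> 'F_2) (h : gen C -> gen C -> 'F_2) (h' : gen C' -> gen C' -> 'F_2),
 [/\ supp 0 f, supp 0 g, supp 1 h & supp 1 h'] /\
 [/\ mx (dif C) *m mx f = mx f *m mx (dif C'),
     mx (dif C') *m mx g = mx g *m mx (dif C),
     1%:M - mx f *m mx g = mx (dif C) *m mx h + mx h *m mx (dif C) &
     1%:M - mx g *m mx f = mx (dif C') *m mx h' + mx h' *m mx (dif C')].

Lemma fmap_supp (C C' : cx) f : @fmap C C' f -> supp 0 f.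
Proof. by case=> H _ x y /H [-> ->]; rewrite addr0. Qed.

Lemma fmap_chain (C C' : cx) f : @fmap C C' f ->
  mx (dif C) *m mx f = mx f *m mx (dif C').
Proof. by case=> _ H; rewrite -!mx_mcomp; apply: mx_ext. Qed.

Lemma fhe_FHE C C' : fhe C C' -> FHE C C'.
Proof.
case=> f [g [h [h' [[Hf Hg Hh Hh'] [E1 E2]]]]].
exists f, g, h, h'; split; first by split => //; apply: fmap_supp.
split; try exact: fmap_chain.
- by rewrite -mx_idm -!mx_mcomp -mxB -mxD; apply: mx_ext.
- by rewrite -mx_idm -!mx_mcomp -mxB -mxD; apply: mx_ext.
Qed.

Lemma FHE_sym C C' : FHE C C' -> FHE C' C.
Proof.
case=> f [g [h [h' [[Hf Hg Hh Hh'] [E1 E2 E3 E4]]]]].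
by exists g, f, h', h.
Qed.

Lemma htpy_comp n n' n'' (D : 'M['F_2]_n) (D' : 'M['F_2]_n') (F1 : 'M_(n, n'))
  (G1 : 'M_(n', n)) (H1 : 'M_n) (F2 : 'M_(n', n'')) (G2 : 'M_(n'', n')) (K : 'M_n') :
  D *m F1 = F1 *m D' -> D' *m G1 = G1 *m D ->
  1%:M - F1 *m G1 = D *m H1 + H1 *m D ->
  1%:M - F2 *m G2 = D' *m K + K *m D' ->
  1%:M - (F1 *m F2) *m (G2 *m G1) =
    D *m (H1 + F1 *m K *m G1) + (H1 + F1 *m K *m G1) *m D.
Proof.
move=> c1 c2 e1 e2.
have -> : 1%:M - (F1 *m F2) *m (G2 *m G1) =
          (1%:M - F1 *m G1) + F1 *m (1%:M - F2 *m G2) *m G1.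
  rewrite mulmxBr mulmxBl mulmx1 !mulmxA.
  by rewrite addrA addrNK.
rewrite e1 e2 mulmxDr mulmxDl !mulmxDr !mulmxDl !mulmxA c1.
rewrite -[F1 *m K *m D' *m G1]mulmxA c2 !mulmxA.
by rewrite !addrA; congr (_ + _); rewrite -!addrA; congr (_ + _); rewrite addrC.
Qed.

Lemma FHE_trans C C' C'' : FHE C C' -> FHE C' C'' -> FHE C C''.
Proof.
case=> f [g [h [h' [[Hf Hg Hh Hh'] [E1 E2 E3 E4]]]]].
case=> f2 [g2 [k [k' [[Hf2 Hg2 Hk Hk'] [F1 F2 F3 F4]]]]].
exists (mcomp f f2), (mcomp g2 g),
  (fun x z => h x z + mcomp (mcomp f k) g x z),
  (fun x z => k' x z + mcomp (mcomp g2 h') f2 x z).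
split.
  split.
  - exact: supp_k (supp_mcomp Hf Hf2).
  - exact: supp_k (supp_mcomp Hg2 Hg).
  - apply: supp_add => //; apply: supp_k (supp_mcomp (supp_mcomp Hf Hk) Hg).
    by rewrite add0r addr0.
  - apply: supp_add => //; apply: supp_k (supp_mcomp (supp_mcomp Hg2 Hh') Hf2).
    by rewrite add0r addr0.
rewrite !mxD !mx_mcomp; split.
- by rewrite mulmxA E1 -mulmxA F1 mulmxA.
- by rewrite mulmxA F2 -mulmxA E2 mulmxA.
- exact: (htpy_comp E1 E2 E3 F3).
- exact: (htpy_comp F2 F1 F4 E4).
Qed.

Definition tmx {T1 T2 U1 U2 : finType} (A : 'M['F_2]_(#|T1|, #|U1|)) (B : 'M['F_2]_(#|T2|, #|U2|))
  : 'M['F_2]_(#|{: T1 * T2}|, #|{: U1 * U2}|) :=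
  \matrix_(i, j) (A (enum_rank (enum_val i).1) (enum_rank (enum_val j).1) *
                  B (enum_rank (enum_val i).2) (enum_rank (enum_val j).2)).

Section Tens.
Variables (T1 T2 U1 U2 V1 V2 : finType).
Implicit Types (A : 'M['F_2]_(#|T1|, #|U1|)) (B : 'M['F_2]_(#|T2|, #|U2|)).

Lemma mx_tm (f : T1 -> U1 -> 'F_2) (g : T2 -> U2 -> 'F_2) :
  mx (fun p q => f p.1 q.1 * g p.2 q.2) = tmx (mx f) (mx g).
Proof. by apply/matrixP => i j; rewrite !mxE !enum_rankK. Qed.

Lemma tmxDl A A' B : tmx (A + A') B = tmx A B + tmx A' B.
Proof. by apply/matrixP => i j; rewrite !mxE mulrDl. Qed.
Lemma tmxDr A B B' : tmx A (B + B') = tmx A B + tmx A B'.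
Proof. by apply/matrixP => i j; rewrite !mxE mulrDr. Qed.
Lemma tmxBl A A' B : tmx (A - A') B = tmx A B - tmx A' B.
Proof. by apply/matrixP => i j; rewrite !mxE mulrBl. Qed.
Lemma tmxBr A B B' : tmx A (B - B') = tmx A B - tmx A B'.
Proof. by apply/matrixP => i j; rewrite !mxE mulrBr. Qed.

Lemma sum_er (U : finType) (F : 'I_#|U| -> 'F_2) :
  \sum_(j < #|U|) F j = \sum_(y : U) F (enum_rank y).
Proof. by rewrite -sum_ev; apply: eq_bigr => j _; rewrite enum_valK. Qed.

Lemma tmx_mul A B (A' : 'M_(#|U1|, #|V1|)) (B' : 'M_(#|U2|, #|V2|)) :
  tmx A B *m tmx A' B' = tmx (A *m A') (B *m B').
Proof.
apply/matrixP => i k; rewrite !mxE sum_er.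
have -> : \sum_(p : {: U1 * U2}) tmx A B i (enum_rank p) * tmx A' B' (enum_rank p) k
  = \sum_(x : U1) \sum_(y : U2) tmx A B i (enum_rank (x, y)) * tmx A' B' (enum_rank (x, y)) k.
  by rewrite pair_bigA; apply: eq_bigr => [[x y]] _.
rewrite !sum_er big_distrl /=; apply: eq_bigr => x _.
rewrite big_distrr /=; apply: eq_bigr => y _.
rewrite !mxE !enum_rankK /=; ring.
Qed.

End Tens.

Lemma tmx11 (T1 T2 : finType) : tmx (1%:M : 'M_#|T1|) (1%:M : 'M_#|T2|) = 1%:M.
Proof.
apply/matrixP => i j; rewrite !mxE !(inj_eq enum_rank_inj).
rewrite -(inj_eq enum_val_inj); case: (enum_val i) => a b; case: (enum_val j) => c d /=.
by rewrite xpair_eqE; case: (a == c); case: (b == d); rewrite ?mulr1 ?mulr0 ?mul0r.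
Qed.

Lemma mx_dif_tensor (C1 C2 : cx) :
  mx (dif (tensor C1 C2)) = tmx (mx (dif C1)) 1%:M + tmx 1%:M (mx (dif C2)).
Proof.
apply/matrixP => i j; rewrite !mxE !enum_rankK /=.
by rewrite !(inj_eq enum_rank_inj).
Qed.

Lemma supp_tm (C1 C2 C1' C2' : cx) a b f g :
  @supp C1 C1' a f -> @supp C2 C2' b g ->
  @supp (tensor C1 C2) (tensor C1' C2') (a + b) (fun p q => f p.1 q.1 * g p.2 q.2).
Proof.
move=> Hf Hg [x1 x2] [y1 y2] /=; rewrite mulf_eq0 negb_or => /andP [H1 H2].
have [e1 l1] := Hf _ _ H1; have [e2 l2] := Hg _ _ H2.
by split; [rewrite e1 e2 addrACA | exact: lerD].
Qed.

Lemma char2_fin m n (a b c d e f : 'M['F_2]_(m, n)) :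
  (a + e) + (d + f) = a + b + (c + d) + (e + c + (b + f)).
Proof.
apply/matrixP => i j; rewrite !mxE.
symmetry.
transitivity ((a i j + e i j) + (d i j + f i j) + (b i j + b i j) + (c i j + c i j)).
  ring.
by rewrite !F2_addxx !addr0.
Qed.

Lemma htpy_tens (T1 T2 U1 U2 : finType) (D1 : 'M['F_2]_#|T1|) (D1' : 'M['F_2]_#|U1|)
  (D2 : 'M['F_2]_#|T2|)
  (F1 : 'M['F_2]_(#|T1|, #|U1|)) (G1 : 'M['F_2]_(#|U1|, #|T1|)) (H1 : 'M['F_2]_#|T1|)
  (F2 : 'M['F_2]_(#|T2|, #|U2|)) (G2 : 'M['F_2]_(#|U2|, #|T2|)) (K : 'M['F_2]_#|T2|) :
  D1 *m F1 = F1 *m D1' -> D1' *m G1 = G1 *m D1 ->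
  1%:M - F1 *m G1 = D1 *m H1 + H1 *m D1 ->
  1%:M - F2 *m G2 = D2 *m K + K *m D2 ->
  1%:M - tmx F1 F2 *m tmx G1 G2 =
   (tmx D1 (1%:M : 'M_#|T2|) + tmx (1%:M : 'M_#|T1|) D2) *m
       (tmx H1 (1%:M : 'M_#|T2|) + tmx (F1 *m G1) K) +
   (tmx H1 (1%:M : 'M_#|T2|) + tmx (F1 *m G1) K) *m
       (tmx D1 (1%:M : 'M_#|T2|) + tmx (1%:M : 'M_#|T1|) D2).
Proof.
move=> c1 c2 e1 e2.
have cP : D1 *m (F1 *m G1) = (F1 *m G1) *m D1.
  by rewrite mulmxA c1 -!mulmxA c2.
rewrite tmx_mul.
have -> : F2 *m G2 = 1%:M - (D2 *m K + K *m D2) by rewrite -e2 opprB addrC subrK.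
have -> : tmx (F1 *m G1) (1%:M - (D2 *m K + K *m D2)) =
          tmx (1%:M - (D1 *m H1 + H1 *m D1)) 1%:M - tmx (F1 *m G1) (D2 *m K + K *m D2).
  by rewrite tmxBr -e1 subKr.
rewrite tmxBl tmx11 -addrA -opprD subKr.
rewrite !mulmxDl !mulmxDr !tmx_mul !mul1mx !mulmx1 cP.
rewrite tmxDl tmxDr.
exact: char2_fin.
Qed.

Lemma tmx_chain (T1 T2 U1 U2 : finType) (D1 : 'M['F_2]_#|T1|) (D1' : 'M['F_2]_#|U1|)
  (D2 : 'M['F_2]_#|T2|) (D2' : 'M['F_2]_#|U2|)
  (F1 : 'M['F_2]_(#|T1|, #|U1|)) (F2 : 'M['F_2]_(#|T2|, #|U2|)) :
  D1 *m F1 = F1 *m D1' -> D2 *m F2 = F2 *m D2' ->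
  (tmx D1 (1%:M : 'M_#|T2|) + tmx (1%:M : 'M_#|T1|) D2) *m tmx F1 F2 =
  tmx F1 F2 *m (tmx D1' (1%:M : 'M_#|U2|) + tmx (1%:M : 'M_#|U1|) D2').
Proof.
move=> c1 c2; rewrite mulmxDl mulmxDr !tmx_mul !mul1mx !mulmx1 c1 c2 //.
Qed.

Lemma FHE_tensor C1 C1' C2 C2' :
  FHE C1 C1' -> FHE C2 C2' -> FHE (tensor C1 C2) (tensor C1' C2').
Proof.
case=> f1 [g1 [h1 [h1' [[Hf1 Hg1 Hh1 Hh1'] [E1 E2 E3 E4]]]]].
case=> f2 [g2 [k [k' [[Hf2 Hg2 Hk Hk'] [F1 F2 F3 F4]]]]].
exists (fun p q => f1 p.1 q.1 * f2 p.2 q.2), (fun p q => g1 p.1 q.1 * g2 p.2 q.2),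
  (fun p q => h1 p.1 q.1 * idm p.2 q.2 + mcomp f1 g1 p.1 q.1 * k p.2 q.2),
  (fun p q => h1' p.1 q.1 * idm p.2 q.2 + mcomp g1 f1 p.1 q.1 * k' p.2 q.2).
split.
  split.
  - exact: supp_tm Hf1 Hf2.
  - exact: supp_tm Hg1 Hg2.
  - apply: supp_add; first exact: supp_k (supp_tm Hh1 (@supp_idm C2)).
    exact: supp_k (supp_tm (supp_mcomp Hf1 Hg1) Hk).
  - apply: supp_add; first exact: supp_k (supp_tm Hh1' (@supp_idm C2')).
    exact: supp_k (supp_tm (supp_mcomp Hg1 Hf1) Hk').
rewrite !mx_dif_tensor !mxD !mx_tm !mx_idm !mx_mcomp; split.
- exact: tmx_chain.
- exact: tmx_chain.
- exact: (htpy_tens E1 E2 E3 F3).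
- exact: (htpy_tens E2 E1 E4 F4).
Qed.

Lemma sum_pred1 (T : finType) (x0 : T) (F : T -> 'F_2) :
  \sum_(x : T) (x == x0)%:R * F x = F x0.
Proof.
rewrite (bigD1 x0) //= eqxx mul1r big1 ?addr0 // => x /negbTE ->.
by rewrite mul0r.
Qed.

Lemma rank_pperm (T U : finType) (f : T -> U -> 'F_2) :
 (forall x y y', f x y != 0 -> f x y' != 0 -> y = y') ->
 (forall x x' y, f x y != 0 -> f x' y != 0 -> x = x') ->
 \rank (mx f) = #|[pred x | [exists y, f x y != 0]]|.
Proof.
move=> Hr Hc.
pose S : {pred T} := fun x => [exists y, f x y != 0].
pose k := #|S|.
pose s (r : 'I_k) : T := enum_val r.
have sS r : [exists y, f (s r) y != 0] by have := enum_valP r.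
pose A : 'M['F_2]_(k, #|T|) := \matrix_(r, i) (enum_val i == s r)%:R.
have AM : A *m mx f = \matrix_(r, j) f (s r) (enum_val j).
  apply/matrixP => r j; rewrite !mxE.
  transitivity (\sum_(x : T) (x == s r)%:R * f x (enum_val j)); last exact: sum_pred1.
  by rewrite -[in RHS]sum_ev; apply: eq_bigr => i _; rewrite !mxE.
have Mdef : mx f = A^T *m (A *m mx f).
  apply/matrixP => i j; rewrite AM !mxE.
  have -> : \sum_(r < k) A^T i r * (\matrix_(r0, j0) f (s r0) (enum_val j0)) r j =
            \sum_(x in S) (enum_val i == x)%:R * f x (enum_val j).
    rewrite [in RHS]big_enum_val; apply: eq_bigr => r _; rewrite !mxE.
    by [].
  have [iS|niS] := boolP (enum_val i \in S).
    rewrite (bigD1 (enum_val i)) //= eqxx mul1r big1 ?addr0 // => x /andP [_ /negbTE].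
    by rewrite eq_sym => ->; rewrite mul0r.
  rewrite big1; last first.
    move=> x xS; case: eqVneq => [e|]; last by rewrite mul0r.
    by move: niS; rewrite e xS.
  move: niS; rewrite /S unfold_in /= => /existsPn /(_ (enum_val j)).
  by rewrite negbK => /eqP ->.
apply/eqP; rewrite eqn_leq; apply/andP; split.
  rewrite Mdef; apply: leq_trans (mxrankM_maxr _ _) _; exact: rank_leq_row.
have I1 : (A *m mx f) *m (A *m mx f)^T = 1%:M.
  rewrite AM; apply/matrixP => r r'; rewrite !mxE.
  transitivity (\sum_(y : U) f (s r) y * f (s r') y).
    by rewrite -[in RHS]sum_ev; apply: eq_bigr => i _; rewrite !mxE.
  have [<-|ne] := eqVneq r r'.
    have /existsP [y0 Hy0] := sS r.
    rewrite (bigD1 y0) //= big1 ?addr0; first by rewrite (F2_neq0 Hy0) mulr1.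
    move=> y ny; have [H|H] := eqVneq (f (s r) y) 0; first by rewrite H mul0r.
    by move: ny; rewrite (Hr _ _ _ H Hy0) eqxx.
  rewrite big1 // => y _.
  have [H|H] := eqVneq (f (s r) y) 0; first by rewrite H mul0r.
  have [H'|H'] := eqVneq (f (s r') y) 0; first by rewrite H' mulr0.
  have /enum_val_inj E := Hc _ _ _ H H'.
  by move: ne; rewrite E eqxx.
have : (\rank (1%:M : 'M['F_2]_k) <= \rank (mx f))%N.
  rewrite -I1; apply: leq_trans (mxrankM_maxl _ _) _; exact: mxrankM_maxr.
by rewrite mxrank1.
Qed.

Lemma nb0 (b : bool) : ((b%:R : 'F_2) != 0) = b.
Proof. by case: b; rewrite ?oner_neq0 ?eqxx. Qed.

Lemma grproj_mxE (C : cx) g :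
  grproj C g = mx (fun x y => ((x == y) && (gr C x == g))%:R).
Proof. by apply/matrixP => i j; rewrite !mxE (inj_eq enum_val_inj). Qed.

Lemma rank_grproj (C : cx) g :
  \rank (grproj C g) = #|[pred x : gen C | gr C x == g]|.
Proof.
rewrite grproj_mxE rank_pperm.
- apply: eq_card => x; rewrite !unfold_in /=.
  apply/existsP/idP => [[y]|H]; first by case: (gr C x == g) => //; rewrite andbF eqxx.
  by exists x; rewrite eqxx H.
- by move=> x y y'; rewrite !nb0 => /andP [/eqP <- _] /andP [/eqP <- _].
- by move=> x x' y; rewrite !nb0 => /andP [/eqP -> _] /andP [/eqP -> _].
Qed.

Lemma cx_supp (C : cx) : is_cx C -> supp (-1) (dif C).
Proof. by case=> H _ x y /H. Qed.

Lemma cx_dd (C : cx) : is_cx C -> mx (dif C) *m mx (dif C) = 0.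
Proof. by case=> _ H; rewrite -mx_mcomp -(mx0 (gen C) (gen C)); apply: mx_ext. Qed.

Definition strict (C : cx) := forall x y, dif C x y != 0 -> (flv C y < flv C x)%R.

Definition lvlf (C C' : cx) (f : gen C -> gen C' -> 'F_2) :=
  fun x y => f x y * (flv C' y == flv C x)%:R.

Definition lvl (C C' : cx) (A : 'M['F_2]_(#|gen C|, #|gen C'|)) :
  'M['F_2]_(#|gen C|, #|gen C'|) :=
  \matrix_(i, j) (A i j * (flv C' (enum_val j) == flv C (enum_val i))%:R).

Lemma lvl_mx (C C' : cx) f : lvl (mx f) = mx (@lvlf C C' f).
Proof. by apply/matrixP => i j; rewrite !mxE. Qed.

Lemma lvlD (C C' : cx) (A B : 'M_(#|gen C|, #|gen C'|)) : lvl (A + B) = lvl A + lvl B.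
Proof. by apply/matrixP => i j; rewrite !mxE mulrDl. Qed.

Lemma lvlB (C C' : cx) (A B : 'M_(#|gen C|, #|gen C'|)) : lvl (A - B) = lvl A - lvl B.
Proof. by apply/matrixP => i j; rewrite !mxE mulrBl. Qed.

Lemma lvl1 (C : cx) : @lvl C C 1%:M = 1%:M.
Proof.
apply/matrixP => i j; rewrite !mxE; case: eqVneq => [->|]; first by rewrite eqxx mulr1.
by rewrite mul0r.
Qed.

Lemma supp_lvlf (C C' : cx) k f : @supp C C' k f -> supp k (lvlf f).
Proof.
move=> Hf x y; rewrite /lvlf mulf_eq0 negb_or => /andP [H _]; exact: Hf.
Qed.

Lemma lvl_mul (C C' C'' : cx) k k' f g :
  @supp C C' k f -> @supp C' C'' k' g ->
  lvl (mx f *m mx g) = lvl (mx f) *m lvl (mx g).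
Proof.
move=> Hf Hg; rewrite -mx_mcomp !lvl_mx -mx_mcomp; apply: mx_ext => x z.
rewrite /lvlf /mcomp big_distrl /=; apply: eq_bigr => y _.
have [H1|H1] := eqVneq (f x y) 0; first by rewrite H1 !mul0r.
have [H2|H2] := eqVneq (g y z) 0; first by rewrite H2 mulr0 !mul0r mulr0.
have [_ l1] := Hf _ _ H1; have [_ l2] := Hg _ _ H2.
have -> : (flv C'' z == flv C x) = (flv C' y == flv C x) && (flv C'' z == flv C' y).
  apply/eqP/andP => [E|[/eqP E1 /eqP E2]]; last by rewrite E2 E1.
  have E1 : flv C' y = flv C x.
    by apply/le_anti; rewrite l1 /= -E.
  by split; apply/eqP; rewrite // E1.
by case: (_ == _); case: (_ == _); rewrite /= ?mulr1 ?mulr0 ?mul0r.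
Qed.

Lemma lvl_strict (C : cx) : strict C -> @lvl C C (mx (dif C)) = 0.
Proof.
move=> S; rewrite lvl_mx -(mx0 (gen C) (gen C)); apply: mx_ext => x y.
rewrite /lvlf; have [H|H] := eqVneq (dif C x y) 0; first by rewrite H mul0r.
have := S _ _ H; rewrite lt_neqAle => /andP [/negbTE -> _]; exact: mulr0.
Qed.

Lemma strict_card (C C' : cx) : supp (-1) (dif C) -> supp (-1) (dif C') -> strict C -> strict C' ->
  FHE C C' -> forall g, #|[pred x | gr C x == g]| = #|[pred x | gr C' x == g]|.
Proof.
move=> sd sd' sC sC'.
case=> f [g [h [h' [[Hf Hg Hh Hh'] [E1 E2 E3 E4]]]]] gg.
have FG : mx (lvlf f) *m mx (lvlf g) = 1%:M.
  move/(congr1 (@lvl C C)): E3.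
  rewrite lvlB lvlD lvl1 (lvl_mul Hf Hg) (lvl_mul sd Hh) (lvl_mul Hh sd) lvl_strict //.
  by rewrite mul0mx mulmx0 addr0 !lvl_mx => /eqP; rewrite subr_eq0 => /eqP <-.
have GF : mx (lvlf g) *m mx (lvlf f) = 1%:M.
  move/(congr1 (@lvl C' C')): E4.
  rewrite lvlB lvlD lvl1 (lvl_mul Hg Hf) (lvl_mul sd' Hh') (lvl_mul Hh' sd') lvl_strict //.
  by rewrite mul0mx mulmx0 addr0 !lvl_mx => /eqP; rewrite subr_eq0 => /eqP <-.
have cf := grproj_mx gg (supp_lvlf Hf); have cg := grproj_mx gg (supp_lvlf Hg).
rewrite addr0 in cf cg.
rewrite -!rank_grproj; apply/eqP; rewrite eqn_leq; apply/andP; split.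
  rewrite -[grproj C gg]mulmx1 -FG mulmxA cf -mulmxA.
  by apply: leq_trans (mxrankM_maxr _ _) _; exact: mxrankM_maxl.
rewrite -[grproj C' gg]mulmx1 -GF mulmxA cg -mulmxA.
by apply: leq_trans (mxrankM_maxr _ _) _; exact: mxrankM_maxl.
Qed.

Lemma hom_le (n n' : nat) (D : 'M['F_2]_n) (D' : 'M['F_2]_n') (P : int -> 'M['F_2]_n)
  (P' : int -> 'M['F_2]_n') (F : 'M['F_2]_(n, n')) (G : 'M['F_2]_(n', n)) (H : 'M['F_2]_n)
  (g : int) :
  D *m D = 0 -> D' *m D' = 0 ->
  (forall g, P g *m D = D *m P (g + -1)) -> (forall g, P' g *m D' = D' *m P' (g + -1)) ->
  (forall g, P g *m F = F *m P' (g + 0)) -> (forall g, P' g *m G = G *m P (g + 0)) ->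
  (forall g, P g *m H = H *m P (g + 1)) ->
  D *m F = F *m D' -> D' *m G = G *m D -> 1%:M - F *m G = D *m H + H *m D ->
  (\rank (P g :&: kermx D) - \rank (D *m P g) <=
   \rank (P' g :&: kermx D') - \rank (D' *m P' g))%N.
Proof.
move=> DD DD' PD PD' PF PG PH cF cG eH.
set Z := (P g :&: kermx D)%MS; set B := D *m P g.
set Z' := (P' g :&: kermx D')%MS; set B' := D' *m P' g.
have a : (B' <= Z')%MS.
  rewrite sub_capmx submxMl /=; apply/sub_kermxP.
  by rewrite /B' -mulmxA PD' mulmxA DD' mul0mx.
have b : (B' *m G <= B)%MS.
  by rewrite /B' -mulmxA PG addr0 mulmxA cG -mulmxA submxMl.
have c : (Z <= Z' *m G + B)%MS.
  have ZP : (Z <= P g)%MS by exact: capmxSl.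
  have ZD : Z *m D = 0 by apply/sub_kermxP; exact: capmxSr.
  case/submxP: ZP => W ZW.
  have -> : Z = Z *m F *m G + Z *m H *m D.
    have e1 : 1%:M = F *m G + (D *m H + H *m D) by rewrite -eH addrC subrK.
    rewrite -{1}[Z]mulmx1 e1 !mulmxDr !mulmxA ZD mul0mx add0r //.
  apply: addmx_sub_adds.
    apply: submxMr; rewrite sub_capmx; apply/andP; split.
      by rewrite ZW -mulmxA PF addr0 mulmxA submxMl.
    by apply/sub_kermxP; rewrite -mulmxA -cF mulmxA ZD mul0mx.
  have -> : Z *m H *m D = W *m H *m (D *m P g).
    by rewrite ZW -(mulmxA W) PH mulmxA -(mulmxA (W *m H)) PD -addrA subrr addr0.
  exact: submxMl.
have r1 := mxrankS c.
have r2 := mxrank_sum_cap (Z' *m G) B.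
have r3 := mxrank_mul_ker Z' G.
have r4 := mxrank_mul_ker B' G.
have r5 : (\rank (B' *m G) <= \rank (Z' *m G :&: B))%N.
  by apply: mxrankS; rewrite sub_capmx b submxMr.
have r6 : (\rank (B' :&: kermx G) <= \rank (Z' :&: kermx G))%N.
  by apply: mxrankS; apply: capmxS => //; exact: submx_refl.
have r7 : (\rank (Z' *m G :&: B) <= \rank (Z' *m G))%N by apply: mxrankS; exact: capmxSl.
move: r1 r2 r3 r4 r5 r6 r7.
set a1 := \rank Z; set a2 := \rank (Z' *m G + B); set a3 := \rank (Z' *m G :&: B).
set a4 := \rank (Z' *m G); set a5 := \rank B; set a6 := \rank (Z' :&: kermx G).
set a7 := \rank Z'; set a8 := \rank (B' *m G); set a9 := \rank (B' :&: kermx G).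
set a10 := \rank B'.

lia.
Qed.

Lemma homdimE (C : cx) g :
  homdim C g = (\rank (grproj C g :&: kermx (mx (dif C))) - \rank (mx (dif C) *m grproj C g))%N.
Proof.
rewrite /homdim -rank_grproj.
have := mxrank_mul_ker (grproj C g) (mx (dif C)).
have -> : difmx C = mx (dif C) by [].
move=> <-; rewrite addKn. done.
Qed.

Lemma homdim_FHE (C C' : cx) : is_cx C -> is_cx C' -> FHE C C' ->
  forall g, homdim C g = homdim C' g.
Proof.
move=> cC cC' [f [g [h [h' [[Hf Hg Hh Hh'] [E1 E2 E3 E4]]]]]] gg.
rewrite !homdimE; apply/eqP; rewrite eqn_leq; apply/andP; split.
  apply: (@hom_le _ _ _ _ (grproj C) (grproj C') _ _ _ gg (cx_dd cC) (cx_dd cC') _ _ _ _ _ E1 E2 E3) => k;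
    first [exact: grproj_mx (cx_supp cC) | exact: grproj_mx (cx_supp cC') | exact: grproj_mx Hf
          | exact: grproj_mx Hg | exact: grproj_mx Hh | exact: grproj_mx Hh'].
apply: (@hom_le _ _ _ _ (grproj C') (grproj C) _ _ _ gg (cx_dd cC') (cx_dd cC) _ _ _ _ _ E2 E1 E4) => k;
  first [exact: grproj_mx (cx_supp cC) | exact: grproj_mx (cx_supp cC') | exact: grproj_mx Hf
        | exact: grproj_mx Hg | exact: grproj_mx Hh | exact: grproj_mx Hh'].
Qed.

Definition top (B : cx) (x : gen B) := [exists y, dif B x y != 0].
Definition bot (B : cx) (y : gen B) := [exists x, dif B x y != 0].

Lemma mx_tr (T U : finType) (f : T -> U -> 'F_2) : (mx f)^T = mx (fun y x => f x y).
Proof. by apply/matrixP => i j; rewrite !mxE. Qed.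

Lemma barcx_homdim (B : cx) g : is_barcx B ->
  homdim B g = #|[pred x | (gr B x == g) && ~~ top x && ~~ bot x]|.
Proof.
case=> cB sB r1 c1 tb.
have e1 : grproj B g *m mx (dif B) = mx (fun x y => (gr B x == g)%:R * dif B x y).
  rewrite grproj_mxE -mx_mcomp; apply: mx_ext => x y; rewrite /mcomp.
  rewrite (bigD1 x) //= eqxx big1 ?addr0 // => z /negbTE.
  by rewrite eq_sym => ->; rewrite mul0r.
have e2 : (mx (dif B) *m grproj B g)^T = mx (fun y x => (gr B y == g)%:R * dif B x y).
  rewrite grproj_mxE -mx_mcomp mx_tr; apply: mx_ext => y x; rewrite /mcomp.
  rewrite (bigD1 y) //= eqxx big1 ?addr0; first by rewrite mulrC.
  by move=> z /negbTE ->; rewrite mulr0.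
have nz (b : bool) (a : 'F_2) : (b%:R * a != 0) = b && (a != 0).
  by case: b; rewrite ?mul1r ?mul0r ?eqxx.
rewrite /homdim.
have -> : difmx B = mx (dif B) by [].
rewrite -(mxrank_tr (mx (dif B) *m _)) e1 e2 !rank_pperm;
  try by move=> ? ? ?; rewrite !nz => /andP [_ H1] /andP [_ H2];
    first [exact: (r1 _ _ _ H1 H2) | exact: (c1 _ _ _ H1 H2)].
have -> : #|[pred x | [exists y, (gr B x == g)%:R * dif B x y != 0]]| =
          #|[predI [pred x | gr B x == g] & [pred x | top x]]|.
  apply: eq_card => x; rewrite !inE /top.
  apply/idP/idP => [/existsP [y]|/andP [H /existsP [y Hy]]].
    by rewrite nz => /andP [-> H]; apply/existsP; exists y.
  by apply/existsP; exists y; rewrite nz H.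
have -> : #|[pred y | [exists x, (gr B y == g)%:R * dif B x y != 0]]| =
          #|[predI [predD [pred x | gr B x == g] & [pred x | top x]] & [pred x | bot x]]|.
  apply: eq_card => y; rewrite !inE /top /bot.
  apply/idP/idP => [/existsP [x]|/andP [/andP [Ht H] /existsP [x Hx]]]; last first.
    by apply/existsP; exists x; rewrite nz H.
  rewrite nz => /andP [H Hx]; apply/andP; split; last by apply/existsP; exists x.
  rewrite H andbT; apply/existsP => [[z Hz]].
  by have [_ E] := tb _ _ z Hx; rewrite E eqxx in Hz.
have -> : #|[pred x | (gr B x == g) && ~~ top x && ~~ bot x]| =
          #|[predD [predD [pred x | gr B x == g] & [pred x | top x]] & [pred x | bot x]]|.
  by apply: eq_card => x; rewrite !inE; case: (gr B x == g); case: (top x); case: (bot x).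
rewrite -(cardID [pred x | top x] [pred x | gr B x == g]).
rewrite -(cardID [pred x | bot x] [predD [pred x | gr B x == g] & [pred x | top x]]).
by rewrite addKn addKn.
Qed.

Definition sgn (g : int) : rat := (-1) ^ g.

Lemma sgnE g : sgn g = if odd `|g|%N then -1 else 1.
Proof.
rewrite /sgn; case: g => n /=.
  by rewrite -exprnP -signr_odd; case: (odd n); rewrite ?expr1 ?expr0.
rewrite NegzE -exprnN invr_sign -signr_odd /=.
by case: (odd n); rewrite ?expr1 ?expr0.
Qed.
Lemma sgnD a b : sgn (a + b) = sgn a * sgn b.
Proof. by rewrite /sgn expfzDr // oppr_eq0 oner_eq0. Qed.

Lemma sgnS g : sgn (g + 1) = - sgn g.
Proof. by rewrite sgnD /sgn expr1z mulrN1. Qed.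

Lemma natr_card (T : finType) (P : pred T) : (#|P|%:R : rat) = \sum_x (P x)%:R.
Proof.
rewrite -sum1_card (big_morph (fun n : nat => n%:R : rat) (@natrD _) (erefl _)).
rewrite big_mkcond /=; apply: eq_bigr => x _.
by rewrite unfold_in; case: (P x).
Qed.

Lemma sum_grade (T : finType) (gT : T -> int) (s : seq int) (w : int -> rat) :
  uniq s -> (forall x, gT x \in s) ->
  \sum_x w (gT x) = \sum_(g <- s) (#|[pred x | gT x == g]|)%:R * w g.
Proof.
move=> us ins.
under [RHS]eq_bigr do rewrite natr_card big_distrl /=.
rewrite exchange_big /=; apply: eq_bigr => x _.
rewrite (bigD1_seq (gT x)) //= eqxx mul1r big1 ?addr0 // => g /negbTE.
by rewrite eq_sym => ->; rewrite mul0r.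
Qed.

Lemma sum_by_grading (T U : finType) (gT : T -> int) (gU : U -> int) :
  (forall g, #|[pred x | gT x == g]| = #|[pred y | gU y == g]|) ->
  forall w : int -> rat, \sum_x w (gT x) = \sum_y w (gU y).
Proof.
move=> E w; pose s := undup ([seq gT x | x <- enum T] ++ [seq gU y | y <- enum U]).
have us : uniq s by apply: undup_uniq.
rewrite (sum_grade w us) ?(sum_grade w us).
- by apply: eq_bigr => g _; rewrite E.
- by move=> y; rewrite mem_undup mem_cat; apply/orP; right; apply: map_f; rewrite mem_enum.
- by move=> x; rewrite mem_undup mem_cat; apply/orP; left; apply: map_f; rewrite mem_enum.
Qed.

Lemma sum_uniq (U : finType) (P : pred U) :
  (forall y y', P y -> P y' -> y = y') -> \sum_y (P y)%:R = ([exists y, P y])%:R :> rat.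
Proof.
move=> uP; case: existsP => [[y0 Hy0]|nE].
  rewrite (bigD1 y0) //= Hy0 big1 ?addr0 // => y ny.
  case Py: (P y) => //; by move: ny; rewrite (uP _ _ Py Hy0) eqxx.
by rewrite big1 // => y _; case Py: (P y) => //; case: nE; exists y.
Qed.

Section Bar.
Variable B : cx.
Hypothesis bB : is_barcx B.
Hypothesis sc : forall g, #|[pred x | (gr B x == g) && ~~ top x && ~~ bot x]| = (g == 0 : nat).

Lemma bar_sum (w : int -> rat) :
  \sum_(x : gen B) w (gr B x) = w 0 + \sum_(y : gen B) (bot y)%:R * (w (gr B y) + w (gr B y + 1)).
Proof.
case: bB => [[cg _] _ r1 c1 tb].
have part (x : gen B) : ((~~ top x && ~~ bot x)%:R + (top x)%:R + (bot x)%:R : rat) = 1.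
  case T: (top x); case Bo: (bot x) => //=; rewrite ?addr0 ?add0r //.
  case/existsP: T => y Hy; case/existsP: Bo => z Hz.
  by have [_ E] := tb _ _ y Hz; rewrite E eqxx in Hy.
have -> : \sum_(x : gen B) w (gr B x) = \sum_(x : gen B) (~~ top x && ~~ bot x)%:R * w (gr B x)
   + \sum_(x : gen B) (top x)%:R * w (gr B x) + \sum_(x : gen B) (bot x)%:R * w (gr B x).
  rewrite -!big_split /=; apply: eq_bigr => x _.
  by rewrite -!mulrDl part mul1r.
have -> : \sum_(x : gen B) (~~ top x && ~~ bot x)%:R * w (gr B x) = w 0.
  have s0 (x : gen B) : ~~ top x && ~~ bot x -> gr B x = 0.
    move=> H; apply/eqP; apply: contraT => ne.
    have := sc (gr B x); rewrite (negbTE ne) /= => E.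
    have : (0 < 0)%N; last by [].
    rewrite -[X in (_ < X)%N]E; apply/card_gt0P; exists x.
    by rewrite unfold_in /= eqxx -andbA.
  transitivity (\sum_(x : gen B) (~~ top x && ~~ bot x)%:R * w 0).
    by apply: eq_bigr => x _; case H: (~~ top x && ~~ bot x); rewrite ?mul0r // s0.
  rewrite -big_distrl /= -natr_card.
  have -> : #|[pred x : gen B | ~~ top x && ~~ bot x]| = 1%N.
    have := sc 0; rewrite eqxx /= => <-; apply: eq_card => x; rewrite !unfold_in /=.
    case H: (~~ top x && ~~ bot x); last by rewrite -andbA H andbF.
    by rewrite s0 ?eqxx // -andbA H.
  by rewrite mul1r.
have -> : \sum_(x : gen B) (top x)%:R * w (gr B x) = \sum_(y : gen B) (bot y)%:R * w (gr B y + 1).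
  transitivity (\sum_(x : gen B) \sum_(y : gen B) (dif B x y != 0)%:R * w (gr B y + 1)).
    apply: eq_bigr => x _; rewrite /top.
    transitivity (\sum_(y : gen B) (dif B x y != 0)%:R * w (gr B x)).
      by rewrite -big_distrl /= sum_uniq // => y y'; exact: r1.
    apply: eq_bigr => y _; case: eqVneq => H; first by rewrite !mul0r.
    by have [-> _] := cg _ _ H; rewrite subrK.
  rewrite exchange_big /=; apply: eq_bigr => y _.
  by rewrite -big_distrl /= sum_uniq // => x x'; exact: c1.
rewrite -addrA -big_split /=; congr (_ + _).
by apply: eq_bigr => y _; rewrite mulrDr addrC.
Qed.

End Bar.

Lemma sum_one (T : finType) : \sum_(x : T) (1 : rat) = #|T|%:R.
Proof. by rewrite natr_card; apply: eq_bigr. Qed.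

Section Bar2.
Variable B : cx.
Hypothesis bB : is_barcx B.
Hypothesis sc : forall g, #|[pred x | (gr B x == g) && ~~ top x && ~~ bot x]| = (g == 0 : nat).

Lemma be_def : bars_e B = #|[pred y : gen B | bot y && ~~ odd `|gr B y|%N]|.
Proof. by []. Qed.
Lemma bo_def : bars_o B = #|[pred y : gen B | bot y && odd `|gr B y|%N]|.
Proof. by []. Qed.

Lemma bot_sgn : \sum_(y : gen B) (bot y)%:R * sgn (gr B y) = (bars_e B)%:R - (bars_o B)%:R.
Proof.
rewrite be_def bo_def !natr_card -sumrB; apply: eq_bigr => y _.
rewrite sgnE /=; have [b|b] := boolP (bot y); have [o|o] := boolP (odd `|gr B y|%N);
  rewrite ?b ?o ?(negbTE b) ?(negbTE o) /= ?mul1r ?mul0r ?subr0 ?sub0r //.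
Qed.

Lemma bot_card : \sum_(y : gen B) (bot y)%:R = (bars_e B)%:R + (bars_o B)%:R :> rat.
Proof.
rewrite be_def bo_def !natr_card -big_split; apply: eq_bigr => y _ /=.
have [b|b] := boolP (bot y); have [o|o] := boolP (odd `|gr B y|%N);
  by rewrite ?b ?o ?(negbTE b) ?(negbTE o) /= ?addr0 ?add0r.
Qed.

Lemma bar_card : (#|gen B|%:R : rat) = 1 + 2 * ((bars_e B)%:R + (bars_o B)%:R).
Proof.
rewrite -sum_one (bar_sum bB sc (fun _ => 1)) -bot_card big_distrr /=.
by congr (_ + _); apply: eq_bigr => y _; rewrite mulrC.
Qed.

Lemma bar_chi : \sum_(x : gen B) sgn (gr B x) = 1.
Proof.
rewrite (bar_sum bB sc sgn) big1 ?addr0 //.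
by move=> y _; rewrite sgnS subrr mulr0.
Qed.

Lemma bar_wchi : \sum_(x : gen B) sgn (gr B x) * (gr B x)%:~R
   = - ((bars_e B)%:R - (bars_o B)%:R).
Proof.
rewrite (bar_sum bB sc (fun g => sgn g * g%:~R)) mulr0 add0r -bot_sgn -sumrN.
apply: eq_bigr => y _; rewrite sgnS rmorphD /=; ring.
Qed.

End Bar2.

Lemma strict_bar B : is_barcx B -> strict B.
Proof. by case. Qed.

Lemma strict_tensor C1 C2 : strict C1 -> strict C2 -> strict (tensor C1 C2).
Proof.
move=> s1 s2 [x1 x2] [y1 y2] /= H.
have [H1|H1] := eqVneq (dif C1 x1 y1 * (x2 == y2)%:R) 0.
  rewrite H1 add0r in H.
  have [e|ne] := eqVneq x1 y1; last by move: H; rewrite (negbTE ne) mulr0n mul0r eqxx.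
  subst; rewrite eqxx mul1r in H; rewrite ltrD2l; exact: s2.
have [e|ne] := eqVneq x2 y2; last by move: H1; rewrite (negbTE ne) mulr0n mulr0 eqxx.
subst; rewrite eqxx mulr1 in H1; rewrite ltrD2r; exact: s1.
Qed.

Lemma supp_tensor_dif C1 C2 : is_cx C1 -> is_cx C2 -> supp (-1) (dif (tensor C1 C2)).
Proof.
move=> c1 c2; apply: supp_add.
  by apply: supp_k (supp_tm (cx_supp c1) (@supp_idm C2)); rewrite addr0.
by apply: supp_k (supp_tm (@supp_idm C1) (cx_supp c2)); rewrite add0r.
Qed.

Lemma sum_tensor C1 C2 (w : int -> rat) :
  \sum_(p : gen (tensor C1 C2)) w (gr (tensor C1 C2) p) =
  \sum_(x : gen C1) \sum_(y : gen C2) w (gr C1 x + gr C2 y).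
Proof.
rewrite pair_bigA /=; apply: eq_bigr => [[x y]] _ //.
Qed.

Lemma sum_sgn2 (T U : finType) (a : T -> int) (b : U -> int) :
  \sum_x \sum_y sgn (a x + b y) * (a x + b y)%:~R =
  (\sum_x sgn (a x) * (a x)%:~R) * (\sum_y sgn (b y)) +
  (\sum_x sgn (a x)) * (\sum_y sgn (b y) * (b y)%:~R).
Proof.
rewrite !big_distrl -big_split /=; apply: eq_bigr => x _.
rewrite !big_distrr -big_split /=; apply: eq_bigr => y _.
by rewrite sgnD rmorphD /=; ring.
Qed.

Lemma sc_of (B C : cx) : is_barcx B -> is_cx C -> FHE B C ->
  (forall g, homdim C g = (g == 0 : nat)) ->
  forall g, #|[pred x | (gr B x == g) && ~~ top x && ~~ bot x]| = (g == 0 : nat).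
Proof.
move=> bB cC E H g; rewrite -barcx_homdim // (homdim_FHE _ cC E) //.
by case: bB.
Qed.

Unset Implicit Arguments.

Theorem mainTheorem5
  (Knot : Type) (csum : Knot -> Knot -> Knot) (CFK : Knot -> cx)
  (CFK_cx : forall K, is_cx (CFK K))
  (CFK_hom : forall K (g : int), homdim (CFK K) g = nat_of_bool (g == 0))
  (CFK_sum : forall K1 K2, fhe (CFK (csum K1 K2)) (tensor (CFK K1) (CFK K2)))
  (K1 K2 : Knot) (B1 B2 B12 : cx)
  (bar1 : is_barcx B1) (bar2 : is_barcx B2) (bar12 : is_barcx B12)
  (e1 : fhe B1 (CFK K1)) (e2 : fhe B2 (CFK K2)) (e12 : fhe B12 (CFK (csum K1 K2))) :
  [/\ delta B12 = (delta B1 * delta B2)%N,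
      (bars_e B12)%:Q = (bars_e B1)%:Q + (bars_e B2)%:Q
                        + 1/4 * ((delta B1)%:Q - 1) * ((delta B2)%:Q - 1) &
      (bars_o B12)%:Q = (bars_o B1)%:Q + (bars_o B2)%:Q
                        + 1/4 * ((delta B1)%:Q - 1) * ((delta B2)%:Q - 1)].
Proof.
have E12T : FHE B12 (tensor B1 B2).
  apply: FHE_trans (fhe_FHE e12) _.
  apply: FHE_trans (fhe_FHE (CFK_sum K1 K2)) _.
  exact: FHE_sym (FHE_tensor (fhe_FHE e1) (fhe_FHE e2)).
have sc1 := sc_of bar1 (CFK_cx K1) (fhe_FHE e1) (CFK_hom K1).
have sc2 := sc_of bar2 (CFK_cx K2) (fhe_FHE e2) (CFK_hom K2).
have sc12 := sc_of bar12 (CFK_cx _) (fhe_FHE e12) (CFK_hom _).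
have c1 : is_cx B1 by case: bar1.
have c2 : is_cx B2 by case: bar2.
have c12 : is_cx B12 by case: bar12.
have card12 := strict_card (cx_supp c12) (supp_tensor_dif c1 c2) (strict_bar bar12)
  (strict_tensor (strict_bar bar1) (strict_bar bar2)) E12T.
have S w := sum_by_grading card12 w.
have dd : delta B12 = (delta B1 * delta B2)%N.
  have := S (fun _ => 1); rewrite !sum_one.
  move/eqP; rewrite eqr_nat => /eqP; rewrite /delta => ->.
  exact: card_prod.
have W : \sum_(x : gen B12) sgn (gr B12 x) * (gr B12 x)%:~R =
   \sum_(x : gen B1) \sum_(y : gen B2) sgn (gr B1 x + gr B2 y) * (gr B1 x + gr B2 y)%:~R
  := etrans (S (fun g => sgn g * g%:~R)) (sum_tensor B1 B2 (fun g => sgn g * g%:~R)).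
rewrite sum_sgn2 (bar_wchi bar12 sc12) (bar_wchi bar1 sc1) (bar_wchi bar2 sc2)
  (bar_chi bar1 sc1) (bar_chi bar2 sc2) in W.
have D12 := bar_card bar12 sc12; have D1 := bar_card bar1 sc1; have D2 := bar_card bar2 sc2.
rewrite -/(delta B12) -/(delta B1) -/(delta B2) dd natrM in D12.
rewrite -/(delta B1) in D1; rewrite -/(delta B2) in D2.
move: D12 W; rewrite D1 D2.
set a := (bars_e B1)%:R; set b := (bars_o B1)%:R; set c := (bars_e B2)%:R.
set d := (bars_o B2)%:R; set x := (bars_e B12)%:R; set y := (bars_o B12)%:R.
move=> D12 W.
have hx : x = a + c + (a + b) * (c + d) by nra.
have hy : y = b + d + (a + b) * (c + d) by nra.
rewrite -!pmulrn D1 D2 -/a -/b -/c -/d -/x -/y hx hy.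
by split => //; field.
Qed.
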